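(* Let $A=(\alpha_{i,j})$ be an $n\times n$ ($n\ge 2$) symmetric exceptional magic matrix with rational entries, and let $s(A)$ be its common row/column sum. Then there exists a tree $(\mathcal R,\gamma)$ on $\{1,\dots,n\}$ such that $$A=s(A)I+\sum_{T\in\mathcal R}\gamma(T)A(T),$$ with $\gamma(T_0)=\inf\{-\alpha_{i,j}:i\neq j\}$.
   Context: A square matrix is magic if all its row sums and column sums are equal (to $s(A)$). It is exceptional if for every triple $(i,j,k)$ of distinct indices, the maximum of $\alpha_{i,j},\alpha_{j,k},\alpha_{k,i}$ is attained at least twice. $T_0=\{1,\dots,n\}$. A ''species of tree'' is a family $\mathcal R$ of subsets of $T_0$ containing $T_0$, each of cardinality $\ge2$, any two of which are either disjoint or nested. A tree is a pair $(\mathcal R,\gamma)$ with $\mathcal R$ a species of tree and $\gamma:\mathcal R\to\mathbf Q$ with $\gamma(T)>0$ for $T\neq T_0$. For $T$ of cardinality $n(T)\ge2$, $A(T)=(\alpha_{i,j})$ has $\alpha_{i,j}=-1$ if $i\ne j$, $\{i,j\}\subset T$, $\alpha_{i,i}=n(T)-1$ if $i\in T$, $0$ otherwise. $I$ is the identity matrix. *)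

(* Defs.v *)
From mathcomp Require Import all_boot all_order all_algebra.
Set Implicit Arguments. Unset Strict Implicit. Unset Printing Implicit Defensive.
Import Order.TTheory GRing.Theory Num.Theory.
Local Open Scope ring_scope.

Definition is_magic (n : nat) (A : 'M[rat]_n) (s : rat) : Prop :=
  (forall i : 'I_n, \sum_(j < n) A i j = s) /\
  (forall j : 'I_n, \sum_(i < n) A i j = s).

Definition is_exceptional (n : nat) (A : 'M[rat]_n) : Prop :=
  forall i j k : 'I_n, i != j -> j != k -> k != i ->
    let m := Num.max (A i j) (Num.max (A j k) (A k i)) in
    (2 <= (A i j == m) + (A j k == m) + (A k i == m))%N.

(* species of tree on T0 = setT *)
Definition is_species (n : nat) (R : {set {set 'I_n}}) : Prop :=
  [set: 'I_n] \in R /\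
  (forall T, T \in R -> (2 <= #|T|)%N) /\
  (forall T U, T \in R -> U \in R ->
     [disjoint T & U] \/ T \subset U \/ U \subset T).

Definition is_tree (n : nat) (R : {set {set 'I_n}}) (gamma : {set 'I_n} -> rat)
  : Prop :=
  is_species R /\ (forall T, T \in R -> T != [set: 'I_n] -> 0 < gamma T).

Definition AT (n : nat) (T : {set 'I_n}) : 'M[rat]_n :=
  \matrix_(i, j)
    if i == j then (if i \in T then #|T|%:R - 1 else 0)
    else if (i \in T) && (j \in T) then -1 else 0.

(* Main.v *)
Require Import Defs.
From mathcomp Require Import all_boot all_order all_algebra.
From mathcomp Require Import lra.
Import Order.TTheory GRing.Theory Num.Theory.
Local Open Scope ring_scope.
Set Implicit Arguments. Unset Strict Implicit. Unset Printing Implicit Defensive.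

Section Pf.
Variable n : nat.
Variable A : 'M[rat]_n.
Hypothesis Asym : A^T = A.
Hypothesis Aexc : is_exceptional A.

Definition d (i j : 'I_n) : rat := - A i j.

Lemma dC i j : d i j = d j i.
Proof. by rewrite /d -{1}Asym mxE. Qed.

Lemma ultra x y z : x != y -> y != z -> z != x ->
  A z x <= Num.max (A x y) (A y z).
Proof.
move=> xy yz zx; rewrite leNgt; apply/negP => H.
have := Aexc xy yz zx => /=.
have [h1 h2] : A x y < A z x /\ A y z < A z x.
  by case: (leP (A x y) (A y z)) H => h H; split => //; lra.
rewrite (@max_r _ _ (A y z)) ?ltW // max_r ?ltW //.
by rewrite eqxx (lt_eqF h1) (lt_eqF h2).
Qed.

Definition r t x y := (x == y) || (t <= d x y).

Lemma r_refl t x : r t x x.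
Proof. by rewrite /r eqxx. Qed.

Lemma r_sym t x y : r t x y = r t y x.
Proof. by rewrite /r eq_sym dC. Qed.

Lemma r_trans t x y z : r t x y -> r t y z -> r t x z.
Proof.
rewrite /r.
have [exy|xy] := eqVneq x y; first by subst y.
have [eyz|yz] := eqVneq y z; first by subst z; rewrite (negbTE xy).
have [exz|xz] := eqVneq x z; first by [].
rewrite /= => h1 h2.
have zx : z != x by rewrite eq_sym.
have := ultra xy yz zx.
move: h1 h2; rewrite /d (_ : A x z = A z x); last by rewrite -{1}Asym mxE.
move=> h1 h2; rewrite le_max => /orP[H|H]; lra.
Qed.

Definition D := [seq d p.1 p.2 | p <- enum [pred p : 'I_n * 'I_n | p.1 != p.2]].
Definition vs := sort <=%O (undup D).
Definition N := size vs.

Lemma vs_sorted : sorted <%O vs.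
Proof. by rewrite /vs sort_lt_sorted undup_uniq. Qed.

Lemma dvs i j : i != j -> d i j \in vs.
Proof.
move=> ij; rewrite /vs mem_sort mem_undup.
by apply/mapP; exists (i, j); rewrite ?mem_enum.
Qed.

Lemma vsd x : x \in vs -> exists i j, i != j /\ x = d i j.
Proof.
rewrite /vs mem_sort mem_undup => /mapP [[i j]]; rewrite mem_enum /= => ij ->.
by exists i, j.
Qed.

Lemma le_idx k p : (k < N)%N -> (p < N)%N -> (vs`_k <= vs`_p) = (k <= p)%N.
Proof. by move=> hk hp; rewrite (lt_sorted_leq_nth 0 vs_sorted). Qed.

Lemma lt_idx k p : (k < N)%N -> (p < N)%N -> (vs`_k < vs`_p) = (k < p)%N.
Proof. by move=> hk hp; rewrite (lt_sorted_ltn_nth 0 vs_sorted). Qed.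

Definition Clt t (a : 'I_n) : {set 'I_n} := [set j | r t a j].
Definition Cl a k := Clt vs`_k a.

Lemma Clt_refl t a : a \in Clt t a.
Proof. by rewrite inE r_refl. Qed.

Lemma Clt_eq t a x : x \in Clt t a -> Clt t a = Clt t x.
Proof.
rewrite inE => ax; apply/setP => y; rewrite !inE; apply/idP/idP => h.
  by apply: r_trans h; rewrite r_sym.
exact: r_trans h.
Qed.

Lemma Clt_mono t t' a : t <= t' -> Clt t' a \subset Clt t a.
Proof.
move=> tt; apply/subsetP => y; rewrite !inE /r => /orP[->//|h].
by rewrite (le_trans tt h) orbT.
Qed.

Lemma Clt_lam t t' a b : t <= t' ->
  [disjoint Clt t a & Clt t' b] \/ Clt t' b \subset Clt t a.
Proof.
move=> tt; case: (boolP [disjoint Clt t a & Clt t' b]) => [h|]; first by left.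
case/pred0Pn => x /andP [xa xb]; right.
rewrite (Clt_eq xb) (Clt_eq xa); exact: Clt_mono.
Qed.

Hypothesis n2 : (2 <= n)%N.

Definition i0 : 'I_n := Ordinal (ltn_trans (ltnSn 0) n2).
Definition i1 : 'I_n := Ordinal n2.

Lemma i01 : i0 != i1.
Proof. by []. Qed.

Lemma N_gt0 : (0 < N)%N.
Proof. by have := dvs i01; rewrite /N; case: vs. Qed.

Lemma vs_idx x : x \in vs -> vs`_(index x vs) = x /\ (index x vs < N)%N.
Proof. by move=> h; rewrite nth_index // index_mem. Qed.

Lemma vs0_le i j : i != j -> vs`_0 <= d i j.
Proof.
move=> ij; have [e hp] := vs_idx (dvs ij).
by rewrite -[X in _ <= X]e le_idx ?N_gt0.
Qed.

Lemma vs0_att : exists i j, i != j /\ vs`_0 = d i j.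
Proof. by apply: vsd; rewrite mem_nth // N_gt0. Qed.

Lemma Cl0 a : Cl a 0 = setT.
Proof.
apply/setP => y; rewrite !inE /r; case: eqVneq => //= ay.
exact: vs0_le.
Qed.

Lemma Cl_notT a k : (0 < k)%N -> (k < N)%N -> Cl a k != setT.
Proof.
move=> k0 kN; apply/eqP => e.
have [i [j [ij e0]]] := vs0_att.
have : j \in Cl a k by rewrite e inE.
rewrite /Cl (@Clt_eq _ a i); last by rewrite -/(Cl a k) e inE.
rewrite inE /r (negbTE ij) /= -e0 le_idx ?N_gt0 //.
by rewrite leqn0; case: k k0 {kN e}.
Qed.

Definition isCl (k : nat) (T : {set 'I_n}) := [exists a, Cl a k == T].
Definition R : {set {set 'I_n}} :=
  [set T | [exists k : 'I_N, isCl k T] && (1 < #|T|)%N].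
Definition w (k : nat) : rat := vs`_k - (if k is k'.+1 then vs`_k' else 0).
Definition gamma (T : {set 'I_n}) : rat :=
  \sum_(k < N) (if isCl k T then w k else 0).

Lemma w_gt0 k : (0 < k)%N -> (k < N)%N -> 0 < w k.
Proof.
case: k => // k _ kN; rewrite /w subr_gt0 lt_idx //.
exact: ltn_trans kN.
Qed.

Lemma isCl0 T : isCl 0 T = (T == setT).
Proof.
apply/existsP/eqP => [[a /eqP <-]|->]; first exact: Cl0.
by exists i0; rewrite Cl0.
Qed.

Lemma setT_R : setT \in R.
Proof.
rewrite inE; apply/andP; split.
  by apply/existsP; exists (Ordinal N_gt0); rewrite isCl0.
by rewrite cardsT card_ord.
Qed.

Lemma gammaT : gamma setT = vs`_0.
Proof.
rewrite /gamma (bigD1 (Ordinal N_gt0)) //= isCl0 eqxx big1 ?addr0 ?/w ?subr0 //.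
move=> k hk; case: ifP => // /existsP [a /eqP e].
have k0 : (0 < k)%N by rewrite lt0n; apply: contra hk => /eqP h; apply/eqP/val_inj.
by move: (Cl_notT a k0 (ltn_ord k)); rewrite e eqxx.
Qed.

Lemma gamma_gt0 T : T \in R -> T != setT -> 0 < gamma T.
Proof.
rewrite inE => /andP [/existsP [k hk] _] nT.
have k0 : (0 < k)%N by rewrite lt0n; apply: contra nT => /eqP h; rewrite -isCl0 -h.
rewrite /gamma (bigD1 k) //= hk ltr_pwDl ?w_gt0 //.
apply: sumr_ge0 => l _; case: ifP => // hl.
have : (0 < l)%N by rewrite lt0n; apply: contra nT => /eqP h; rewrite -isCl0 -h.
by move=> l0; apply: ltW; apply: w_gt0.
Qed.

Lemma R_species : is_species R.
Proof.
split; first exact: setT_R.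
split; first by move=> T; rewrite inE => /andP [].
move=> T U; rewrite !inE => /andP [/existsP [k /existsP [a /eqP <-]] _].
move=> /andP [/existsP [l /existsP [b /eqP <-]] _].
case: (leqP k l) => kl.
  case: (Clt_lam a b (_ : vs`_k <= vs`_l)); [by rewrite le_idx | by left | by right; right].
case: (Clt_lam b a (_ : vs`_l <= vs`_k)); [by rewrite le_idx // ltnW | | by right; left].
by rewrite disjoint_sym; left.
Qed.

Lemma sum_w p : \sum_(k < p.+1) w k = vs`_p.
Proof.
elim: p => [|p IH]; first by rewrite big_ord1 /w subr0.
by rewrite big_ord_recr /= IH /w addrC subrK.
Qed.

Lemma per_k i j (k : 'I_N) : i != j ->
  \sum_(T in R) (if (i \in T) && (j \in T) && isCl k T then w k else 0) =
  if vs`_k <= d i j then w k else 0.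
Proof.
move=> ij; case: ifP => hk.
  have jC : j \in Cl i k by rewrite inE /r hk orbT.
  have iC : i \in Cl i k by exact: Clt_refl.
  have CR : Cl i k \in R.
    rewrite inE; apply/andP; split; first by apply/existsP; exists k; apply/existsP; exists i.
    apply: (@leq_trans #|[set i; j]|); first by rewrite cards2 ij.
    apply: subset_leq_card; apply/subsetP => x; rewrite in_set2.
    by case/orP => /eqP ->.
  rewrite (bigD1 (Cl i k)) //= iC jC /=.
  rewrite (_ : isCl k (Cl i k)); last by apply/existsP; exists i.
  rewrite big1 ?addr0 // => T /andP [_ nT].
  case: ifP => // /andP [/andP [iT jT] /existsP [a /eqP e]].
  by move: nT; rewrite -e /Cl (Clt_eq (_ : i \in Clt vs`_k a)) ?eqxx // -/(Cl a k) e.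
rewrite big1 // => T _; case: ifP => // /andP [/andP [iT jT] /existsP [a /eqP e]].
move: jT; rewrite -e /Cl (Clt_eq (_ : i \in Clt vs`_k a)); last by rewrite -/(Cl a k) e.
by rewrite inE /r (negbTE ij) hk.
Qed.

Lemma sumR i j : i != j ->
  \sum_(T in R) (if (i \in T) && (j \in T) then gamma T else 0) = d i j.
Proof.
move=> ij.
transitivity (\sum_(T in R) \sum_(k < N)
   (if (i \in T) && (j \in T) && isCl k T then w k else 0)).
  apply: eq_bigr => T _; case: ifP => h; last by rewrite big1.
  by apply: eq_bigr => k _.
rewrite exchange_big /=.
rewrite (eq_bigr (fun k : 'I_N => if vs`_k <= d i j then w k else 0)); last first.
  by move=> k _; apply: per_k.
have [e hp] := vs_idx (dvs ij).
set p := index (d i j) vs in e hp.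
rewrite -[in RHS]e -sum_w (big_ord_widen N) // big_mkcond /=.
rewrite [RHS]big_mkcond; apply: eq_bigr => k _; rewrite -[in LHS]e le_idx // ltnS.
Qed.

End Pf.

Lemma AT_off n (T : {set 'I_n}) i j : i != j ->
  AT T i j = if (i \in T) && (j \in T) then -1 else 0.
Proof. by move=> ij; rewrite /AT mxE (negbTE ij). Qed.

Lemma AT_row n (T : {set 'I_n}) i : \sum_j AT T i j = 0.
Proof.
rewrite (bigD1 i) //= /AT mxE eqxx.
under eq_bigr => j ji do rewrite mxE eq_sym (negbTE ji).
case: (boolP (i \in T)) => iT /=; last by rewrite big1 ?addr0.
rewrite (eq_bigr (fun j => if j \in T then -1 else 0)) //.
rewrite -big_mkcondr /= sumr_const.
have -> : #|[pred j | (j != i) && (j \in T)]| = #|T|.-1.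
  rewrite (cardD1 i T) iT /=; apply: eq_card => x; rewrite !inE.
  by [].
rewrite (cardD1 i T) iT /= add0n mulNrn natrD.
set c := (_ *+ _); lra.
Qed.

Lemma mx_eq_rows n (M M' : 'M[rat]_n) :
  (forall i j, i != j -> M i j = M' i j) ->
  (forall i, \sum_j M i j = \sum_j M' i j) -> M = M'.
Proof.
move=> hoff hrow; apply/matrixP => i j.
case: (eqVneq i j) => [<-|ij]; last exact: hoff.
have := hrow i; rewrite (bigD1 i) //= [in RHS](bigD1 i) //=.
rewrite (eq_bigr (fun j => M' i j)) => [|k ki]; last by apply: hoff; rewrite eq_sym.
by move/addIr.
Qed.
Theorem mainTheorem6 (n : nat) (A : 'M[rat]_n) (s : rat) :
  (2 <= n)%N ->
  A^T = A ->
  is_exceptional A ->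
  is_magic A s ->
  exists (R : {set {set 'I_n}}) (gamma : {set 'I_n} -> rat),
    is_tree R gamma /\
    A = s%:M + \sum_(T in R) gamma T *: AT T /\
    (* gamma(T0) = inf { -A i j : i <> j } *)
    (forall i j : 'I_n, i != j -> gamma [set: 'I_n] <= - A i j) /\
    (exists i j : 'I_n, i != j /\ gamma [set: 'I_n] = - A i j).
Proof.
move=> n2 Asym Aexc [rows cols].
exists (R A), (gamma A).
split; first by split; [exact: R_species | move=> T; exact: gamma_gt0].
split.
  apply: mx_eq_rows.
    move=> i j ij; rewrite !mxE (negbTE ij) mulr0n add0r summxE.
    under eq_bigr => T _ do rewrite mxE AT_off //.
    rewrite (eq_bigr (fun T : {set 'I_n} => - (if (i \in T) && (j \in T) then gamma A T else 0))).
      by rewrite sumrN sumR // /d opprK.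
    by move=> T _; case: ifP; rewrite ?mulrN1 ?mulr0 ?oppr0.
  move=> i; rewrite rows.
  under eq_bigr => j _ do rewrite !mxE summxE.
  rewrite big_split /= (bigD1 i) //= eqxx mulr1n big1 ?addr0; last first.
    by move=> j ji; rewrite eq_sym (negbTE ji) mulr0n.
  rewrite exchange_big /= big1 ?addr0 // => T _.
  under eq_bigr => j _ do rewrite mxE.
  by rewrite -mulr_sumr AT_row mulr0.
rewrite (gammaT Asym Aexc n2); split.
  by move=> i j ij; exact: vs0_le.
exact: vs0_att.
Qed.
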